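(* Let $H_3$ be the simply connected 3-dimensional Heisenberg group, realized as $\mathbb{R}^3$ with coordinates $(x,y,z)$ and group law $(a,b,c)\cdot(x,y,z)=(a+x,\,b+y,\,c+z-ay)$, so that $F_1=\partial_z$, $F_2=\partial_y-x\partial_z$, $F_3=\partial_x$ are left-invariant with the only nonzero bracket $[F_2,F_3]=F_1$. Consider the left-invariant Lorentzian metrics $g_1=-dx^2+dy^2+(x\,dy+dz)^2$ and $g_2=dx^2+dy^2-(x\,dy+dz)^2$ (so $g_1$ makes $F_1,F_2,F_3$ orthonormal with $F_3$ timelike, and $g_2$ makes them orthonormal with $F_1$ timelike). Then $g_1$ and $g_2$ are nilsolitons, and each of $(\mathfrak{h}_3,g_1)$, $(\mathfrak{h}_3,g_2)$ admits a metric solvable extension which is an Einstein metric.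
   Context: For a simply connected Lie group $G$ with Lie algebra $\mathfrak{g}$ and left-invariant pseudo-Riemannian metric $g$, $g$ is an algebraic Ricci soliton if $\mathrm{ric}=c\,\mathrm{Id}+D$ for some $c\in\mathbb{R}$ and some derivation $D$ of $\mathfrak{g}$, where $\mathrm{ric}$ is the Ricci operator ($g(\mathrm{ric}X,Y)=\mathrm{Ric}(X,Y)$); it is a nilsoliton if $G$ is nilpotent. A metric solvable extension of $(\mathfrak{n},g)$ is a solvable Lie algebra $\mathfrak{s}=\mathfrak{a}\oplus\mathfrak{n}$ (as vector spaces) with bracket $[\cdot,\cdot]'$ and a pseudo-Riemannian inner product $\tilde g$ such that $[\mathfrak{s},\mathfrak{s}]'=\mathfrak{n}=\mathfrak{a}^{\perp}$, $[X,Y]'=[X,Y]$ and $\tilde g(X,Y)=g(X,Y)$ for all $X,Y\in\mathfrak{n}$. It is Einstein if the corresponding left-invariant metric satisfies $\mathrm{Ric}(\tilde g)=\kappa\tilde g$ for a constant $\kappa$. $\mathfrak{h}_3$ denotes the Lie algebra of $H_3$. *)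

(* Defs.v *)
(* Left-invariant pseudo-Riemannian geometry of a Lie group,
   encoded (as usual) at the level of its Lie algebra: a real Lie algebra of
   dimension n given by structure constants in a basis e_0..e_(n-1), vectors
   are row vectors 'rV[R]_n, a pseudo-Riemannian inner product is a
   symmetric invertible Gram matrix G. *)
From HB Require Import structures.
From mathcomp Require Import all_boot all_order all_algebra.
Set Implicit Arguments. Unset Strict Implicit. Unset Printing Implicit Defensive.
Import Order.TTheory GRing.Theory Num.Theory.
Local Open Scope ring_scope.

Section LieMetric.
Variable R : rcfType.
Variable n : nat.
(* cst i j k = k-th coordinate of [e_i, e_j] *)
Variable cst : 'I_n -> 'I_n -> 'I_n -> R.
Variable G : 'M[R]_n.

Definition ebasis (k : 'I_n) : 'rV[R]_n := delta_mx 0 k.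

Definition br (u v : 'rV[R]_n) : 'rV[R]_n :=
  \sum_(i < n) \sum_(j < n) (u 0 i * v 0 j) *: \row_(k < n) cst i j k.

Definition ip (u v : 'rV[R]_n) : R := (u *m G *m v^T) 0 0.

Definition is_lie : Prop :=
  (forall u v, br u v = - br v u) /\
  (forall u v w, br (br u v) w + br (br v w) u + br (br w u) v = 0).

Definition pseudo_metric : Prop := G^T = G /\ G \in unitmx.

(* Levi-Civita connection on left-invariant fields (Koszul formula):
   2 g(nabla_u v, w) = g([u,v],w) - g([v,w],u) + g([w,u],v). *)
Definition nabla (u v : 'rV[R]_n) : 'rV[R]_n :=
  (2%:R^-1) *: (\row_(k < n) (ip (br u v) (ebasis k) - ip (br v (ebasis k)) u
                               + ip (br (ebasis k) u) v)) *m invmx G.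

Definition curv (u v w : 'rV[R]_n) : 'rV[R]_n :=
  nabla u (nabla v w) - nabla v (nabla u w) - nabla (br u v) w.

Definition Ric (u v : 'rV[R]_n) : R := \sum_(k < n) (curv (ebasis k) u v) 0 k.

Definition RicM : 'M[R]_n := \matrix_(i < n, j < n) Ric (ebasis i) (ebasis j).

(* Ricci operator ric, acting on row vectors by u |-> u *m ricop, so that
   g(ric u, v) = Ric(u, v). *)
Definition ricop : 'M[R]_n := RicM *m invmx G.

Definition derivation (D : 'M[R]_n) : Prop :=
  forall u v, br u v *m D = br (u *m D) v + br u (v *m D).

Definition alg_ricci_soliton : Prop :=
  exists (c : R) (D : 'M[R]_n), derivation D /\ ricop = c%:M + D.

(* subspaces as row spaces of square matrices *)
Definition derived_sub (W : 'M[R]_n) : 'M[R]_n :=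
  (\sum_(i < n) \sum_(j < n) <<br (row i W) (row j W)>>)%MS.
Definition lcs_step (W : 'M[R]_n) : 'M[R]_n :=
  (\sum_(i < n) \sum_(j < n) <<br (ebasis i) (row j W)>>)%MS.

Definition solvable_lie : Prop :=
  exists k : nat, \rank (iter k derived_sub 1%:M) = 0%N.
Definition nilpotent_lie : Prop :=
  exists k : nat, \rank (iter k lcs_step 1%:M) = 0%N.

Definition nilsoliton : Prop :=
  is_lie /\ pseudo_metric /\ nilpotent_lie /\ alg_ricci_soliton.

Definition einstein : Prop := exists kappa : R, RicM = kappa *: G.

End LieMetric.

(* Metric solvable extension s = a (+) n, with a spanned by the first m basis
   vectors and n by the last n basis vectors (embedded by v |-> row_mx 0 v). *)
Definition metric_solv_ext (R : rcfType) (n : nat)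
    (cst : 'I_n -> 'I_n -> 'I_n -> R) (G : 'M[R]_n)
    (m : nat) (cs : 'I_(m + n) -> 'I_(m + n) -> 'I_(m + n) -> R)
    (Gs : 'M[R]_(m + n)) : Prop :=
  is_lie cs /\ pseudo_metric Gs /\ solvable_lie cs /\
  (forall u v : 'rV[R]_n,
      br cs (row_mx 0 u) (row_mx 0 v) = row_mx 0 (br cst u v)) /\
  (forall u v : 'rV[R]_n, ip Gs (row_mx 0 u) (row_mx 0 v) = ip G u v) /\
  (derived_sub cs 1%:M == row_mx (0 : 'M[R]_(n, m)) (1%:M : 'M[R]_n))%MS /\
  (forall v : 'rV[R]_(m + n),
      (forall u : 'rV[R]_m, ip Gs (row_mx u 0) v = 0) <->
      exists w : 'rV[R]_n, v = row_mx 0 w).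

(* Heisenberg algebra h3, basis F1,F2,F3 = indices 0,1,2, [F2,F3] = F1 *)
Definition h3 (R : rcfType) (i j k : 'I_3) : R :=
  if [&& nat_of_ord i == 1%N, nat_of_ord j == 2%N & nat_of_ord k == 0%N] then 1
  else if [&& nat_of_ord i == 2%N, nat_of_ord j == 1%N & nat_of_ord k == 0%N]
  then -1 else 0.

Definition diag3 (R : rcfType) (a b c : R) : 'M[R]_3 :=
  \matrix_(i < 3, j < 3)
    (if i == j then (if nat_of_ord i == 0%N then a
                     else if nat_of_ord i == 1%N then b else c) else 0).

(* g1 = -dx^2 + dy^2 + (x dy + dz)^2 : F1,F2,F3 orthonormal, F3 timelike *)
Definition g1 (R : rcfType) : 'M[R]_3 := diag3 1 1 (-1).
(* g2 = dx^2 + dy^2 - (x dy + dz)^2 : F1,F2,F3 orthonormal, F1 timelike *)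
Definition g2 (R : rcfType) : 'M[R]_3 := diag3 (-1) 1 1.

(* Main.v *)
Require Import Defs.
From HB Require Import structures.
From mathcomp Require Import all_boot all_order all_algebra.
From mathcomp Require Import ring lra.
Import Order.TTheory GRing.Theory Num.Theory.
Set Implicit Arguments. Unset Strict Implicit. Unset Printing Implicit Defensive.
Local Open Scope ring_scope.


Definition diagm (R : rcfType) n (g : 'I_n -> R) : 'M[R]_n :=
  \matrix_(i < n, j < n) (if i == j then g i else 0).

Definition g3 (R : rcfType) (a b c : R) (i : 'I_3) : R :=
  if nat_of_ord i == 0%N then a else if nat_of_ord i == 1%N then b else c.

Lemma diag3E (R : rcfType) (a b c : R) : diag3 a b c = diagm (g3 a b c).
Proof. by []. Qed.

Lemma mul_diag (R : rcfType) n p (g : 'I_n -> R) (x : 'M[R]_(p, n)) i l :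
  (x *m diagm g) i l = x i l * g l.
Proof.
rewrite mxE (bigD1 l) //= mxE eqxx big1 ?addr0 // => k /negbTE nk.
by rewrite mxE nk mulr0.
Qed.

Lemma diag_sq (R : rcfType) n (g : 'I_n -> R) :
  (forall i, g i * g i = 1) -> diagm g *m diagm g = 1%:M.
Proof.
move=> Hg; apply/matrixP => i j; rewrite mul_diag !mxE.
by case: eqP => [->|_]; rewrite ?Hg ?mul0r.
Qed.

Lemma diag_unit (R : rcfType) n (g : 'I_n -> R) :
  (forall i, g i * g i = 1) -> diagm g \in unitmx.
Proof. by move=> Hg; case: (mulmx1_unit (diag_sq Hg)). Qed.

Lemma diag_inv (R : rcfType) n (g : 'I_n -> R) :
  (forall i, g i * g i = 1) -> invmx (diagm g) = diagm g.
Proof.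
move=> Hg; by rewrite -[LHS]mulmx1 -(diag_sq Hg) mulKmx ?diag_unit.
Qed.

Lemma diag_tr (R : rcfType) n (g : 'I_n -> R) : (diagm g)^T = diagm g.
Proof. by apply/matrixP => i j; rewrite !mxE eq_sym; case: eqP => // ->. Qed.

Lemma diag_pm (R : rcfType) n (g : 'I_n -> R) :
  (forall i, g i * g i = 1) -> pseudo_metric (diagm g).
Proof. by move=> Hg; split; [apply: diag_tr | apply: diag_unit]. Qed.

Lemma ipE (R : rcfType) n (g : 'I_n -> R) u v :
  ip (diagm g) u v = \sum_i u 0 i * g i * v 0 i.
Proof. by rewrite /ip mxE; apply eq_bigr => j _; rewrite mul_diag mxE. Qed.

Lemma brE (R : rcfType) n (cst : 'I_n -> 'I_n -> 'I_n -> R) u v k :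
  br cst u v 0 k = \sum_i \sum_j u 0 i * v 0 j * cst i j k.
Proof.
rewrite /br summxE; apply eq_bigr => i _; rewrite summxE; apply eq_bigr => j _.
by rewrite !mxE.
Qed.

Lemma ebE (R : rcfType) n (k l : 'I_n) : ebasis R k 0 l = (l == k)%:R.
Proof. by rewrite mxE eqxx. Qed.

Lemma pickr (R : rcfType) n (F : 'I_n -> R) k :
  \sum_i F i * (i == k)%:R = F k.
Proof.
rewrite (bigD1 k) //= eqxx mulr1 big1 ?addr0 // => i /negbTE ->.
by rewrite mulr0.
Qed.

Lemma pickl (R : rcfType) n (F : 'I_n -> R) k :
  \sum_i (i == k)%:R * F i = F k.
Proof. by rewrite -[RHS](pickr F); apply eq_bigr => i _; rewrite mulrC. Qed.

Lemma brEr (R : rcfType) n (cst : 'I_n -> 'I_n -> 'I_n -> R) v l m :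
  br cst v (ebasis R l) 0 m = \sum_a v 0 a * cst a l m.
Proof.
rewrite brE; apply eq_bigr => a _.
rewrite -[RHS](pickr (fun b => v 0 a * cst a b m) l); apply eq_bigr => b _.
by rewrite ebE mulrAC.
Qed.

Lemma brEl (R : rcfType) n (cst : 'I_n -> 'I_n -> 'I_n -> R) u l m :
  br cst (ebasis R l) u 0 m = \sum_b u 0 b * cst l b m.
Proof.
rewrite brE exchange_big; apply eq_bigr => b _.
rewrite -[RHS](pickr (fun a => u 0 b * cst a b m) l); apply eq_bigr => a _.
by rewrite ebE /=; ring.
Qed.

Definition Gam (R : rcfType) n (cst : 'I_n -> 'I_n -> 'I_n -> R) (g : 'I_n -> R)
  i j l : R :=
  2%:R^-1 * (cst i j l * g l - cst j l i * g i + cst l i j * g j) * g l.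

Lemma nablaE (R : rcfType) n (cst : 'I_n -> 'I_n -> 'I_n -> R) (g : 'I_n -> R) :
  (forall i, g i * g i = 1) -> forall u v l,
  nabla cst (diagm g) u v 0 l = \sum_i \sum_j u 0 i * v 0 j * Gam cst g i j l.
Proof.
move=> Hg u v l.
rewrite /nabla diag_inv // mul_diag !mxE.
have E1 : ip (diagm g) (br cst u v) (ebasis R l) =
   \sum_i \sum_j u 0 i * v 0 j * (cst i j l * g l).
  rewrite ipE.
  under eq_bigr do rewrite ebE.
  rewrite pickr brE mulr_suml; apply eq_bigr => i _; rewrite mulr_suml.
  by apply eq_bigr => j _; rewrite mulrA.
have E2 : ip (diagm g) (br cst v (ebasis R l)) u =
   \sum_i \sum_j u 0 i * v 0 j * (cst j l i * g i).
  rewrite ipE; apply eq_bigr => i _.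
  rewrite brEr mulr_suml mulr_suml; apply eq_bigr => j _; ring.
have E3 : ip (diagm g) (br cst (ebasis R l) u) v =
   \sum_i \sum_j u 0 i * v 0 j * (cst l i j * g j).
  rewrite ipE exchange_big; apply eq_bigr => j _.
  rewrite brEl mulr_suml mulr_suml; apply eq_bigr => i _; ring.
rewrite E1 E2 E3 -sumrB -big_split /= mulr_sumr mulr_suml.
apply eq_bigr => i _; rewrite -sumrB -big_split /= mulr_sumr mulr_suml.
by apply eq_bigr => j _; rewrite /Gam; ring.
Qed.

Lemma nabla_eL (R : rcfType) n (cst : 'I_n -> 'I_n -> 'I_n -> R) (g : 'I_n -> R) :
  (forall i, g i * g i = 1) -> forall a w l,
  nabla cst (diagm g) (ebasis R a) w 0 l = \sum_b w 0 b * Gam cst g a b l.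
Proof.
move=> Hg a w l; rewrite nablaE //.
rewrite -[RHS](pickr (fun i => \sum_b w 0 b * Gam cst g i b l) a).
apply eq_bigr => i _; rewrite mulr_suml; apply eq_bigr => j _.
by rewrite ebE; ring.
Qed.

Lemma nabla_eR (R : rcfType) n (cst : 'I_n -> 'I_n -> 'I_n -> R) (g : 'I_n -> R) :
  (forall i, g i * g i = 1) -> forall x c l,
  nabla cst (diagm g) x (ebasis R c) 0 l = \sum_a x 0 a * Gam cst g a c l.
Proof.
move=> Hg x c l; rewrite nablaE //; apply eq_bigr => i _.
rewrite -[RHS](pickr (fun j => x 0 i * Gam cst g i j l) c).
by apply eq_bigr => j _; rewrite ebE; ring.
Qed.

Lemma nabla_ee (R : rcfType) n (cst : 'I_n -> 'I_n -> 'I_n -> R) (g : 'I_n -> R) :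
  (forall i, g i * g i = 1) -> forall a c l,
  nabla cst (diagm g) (ebasis R a) (ebasis R c) 0 l = Gam cst g a c l.
Proof.
move=> Hg a c l; rewrite nabla_eR //.
rewrite -[RHS](pickl (fun i => Gam cst g i c l) a).
by apply eq_bigr => i _; rewrite ebE.
Qed.

Lemma br_ee (R : rcfType) n (cst : 'I_n -> 'I_n -> 'I_n -> R) a c l :
  br cst (ebasis R a) (ebasis R c) 0 l = cst a c l.
Proof.
rewrite brEr -[RHS](pickl (fun i => cst i c l) a).
by apply eq_bigr => i _; rewrite ebE.
Qed.

Lemma entryB (R : rcfType) m n (A B : 'M[R]_(m, n)) i j : (A - B) i j = A i j - B i j.
Proof. by rewrite !mxE. Qed.

Lemma curvE (R : rcfType) n (cst : 'I_n -> 'I_n -> 'I_n -> R) (G : 'M[R]_n) u v w k :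
  curv cst G u v w 0 k = nabla cst G u (nabla cst G v w) 0 k
     - nabla cst G v (nabla cst G u w) 0 k - nabla cst G (br cst u v) w 0 k.
Proof.
rewrite /curv (entryB (nabla cst G u (nabla cst G v w) - nabla cst G v (nabla cst G u w))
  (nabla cst G (br cst u v) w)).
by rewrite (entryB (nabla cst G u (nabla cst G v w)) (nabla cst G v (nabla cst G u w))).
Qed.

Lemma RicE (R : rcfType) n (cst : 'I_n -> 'I_n -> 'I_n -> R) (g : 'I_n -> R) :
  (forall i, g i * g i = 1) -> forall i j,
  RicM cst (diagm g) i j = \sum_k \sum_b
    (Gam cst g i j b * Gam cst g k b k - Gam cst g k j b * Gam cst g i b k
     - cst k i b * Gam cst g b j k).
Proof.
move=> Hg i j; rewrite mxE /Ric; apply eq_bigr => k _.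
rewrite curvE (nabla_eL cst Hg k (nabla cst (diagm g) (ebasis R i) (ebasis R j)))
  (nabla_eL cst Hg i (nabla cst (diagm g) (ebasis R k) (ebasis R j)))
  (nabla_eR cst Hg (br cst (ebasis R k) (ebasis R i))) -!sumrB.
apply eq_bigr => b _.
by rewrite (nabla_ee cst Hg i j) (nabla_ee cst Hg k j) br_ee.
Qed.

Lemma ricopE (R : rcfType) n (cst : 'I_n -> 'I_n -> 'I_n -> R) (g : 'I_n -> R) :
  (forall i, g i * g i = 1) -> forall i j,
  ricop cst (diagm g) i j = RicM cst (diagm g) i j * g j.
Proof. by move=> Hg i j; rewrite /ricop diag_inv // mul_diag. Qed.

Lemma sum3 (R : rcfType) (F : 'I_3 -> R) :
  \sum_(i < 3) F i = F (@Ordinal 3 0 isT) + F (@Ordinal 3 1 isT) + F (@Ordinal 3 2 isT).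
Proof.
rewrite !big_ord_recr big_ord0 /= add0r.
by congr (F _ + F _ + F _); apply/val_inj.
Qed.

Lemma sum4 (R : rcfType) (F : 'I_4 -> R) :
  \sum_(i < 4) F i = F (@Ordinal 4 0 isT) + F (@Ordinal 4 1 isT)
     + F (@Ordinal 4 2 isT) + F (@Ordinal 4 3 isT).
Proof.
rewrite !big_ord_recr big_ord0 /= add0r.
by congr (F _ + F _ + F _ + F _); apply/val_inj.
Qed.

Lemma diag_mul (R : rcfType) n (g h : 'I_n -> R) :
  diagm g *m diagm h = diagm (fun i => g i * h i).
Proof.
apply/matrixP => i j; rewrite mul_diag !mxE.
by case: eqP => [->|_]; rewrite ?mul0r.
Qed.

Lemma lcs_sub (R : rcfType) n (cst : 'I_n -> 'I_n -> 'I_n -> R) (W P Q : 'M[R]_n) :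
  (W <= P)%MS -> P *m P = P -> Q *m Q = Q ->
  (forall u v, v *m P = v -> br cst u v *m Q = br cst u v) ->
  (lcs_step cst W <= Q)%MS.
Proof.
move=> WP PP QQ H.
apply/sumsmx_subP => i _; apply/sumsmx_subP => j _; rewrite genmxE.
have : (row j W <= P)%MS by apply: submx_trans (row_sub j W) WP.
case/submxP => x Ex.
by rewrite -H ?submxMl // Ex -mulmxA PP.
Qed.

Lemma derived_sub_sub (R : rcfType) n (cst : 'I_n -> 'I_n -> 'I_n -> R) (W P Q : 'M[R]_n) :
  (W <= P)%MS -> P *m P = P -> Q *m Q = Q ->
  (forall u v, u *m P = u -> v *m P = v -> br cst u v *m Q = br cst u v) ->
  (derived_sub cst W <= Q)%MS.
Proof.
move=> WP PP QQ H.
apply/sumsmx_subP => i _; apply/sumsmx_subP => j _; rewrite genmxE.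
have : (row j W <= P)%MS by apply: submx_trans (row_sub j W) WP.
case/submxP => x Ex.
have : (row i W <= P)%MS by apply: submx_trans (row_sub i W) WP.
case/submxP => y Ey.
by rewrite -H ?submxMl // ?Ex ?Ey -mulmxA PP.
Qed.


Lemma h3_br (R : rcfType) (u v : 'rV[R]_3) :
  br (@h3 R) u v = (u 0 (@Ordinal 3 1 isT) * v 0 (@Ordinal 3 2 isT)
     - u 0 (@Ordinal 3 2 isT) * v 0 (@Ordinal 3 1 isT)) *: ebasis R (@Ordinal 3 0 isT).
Proof.
apply/rowP => k; rewrite brE !sum3 !mxE.
by case: k => [[|[|[|?]]] Hk] //=; rewrite /h3 /=; ring.
Qed.

Notation o30 := (@Ordinal 3 0 isT).
Notation o31 := (@Ordinal 3 1 isT).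
Notation o32 := (@Ordinal 3 2 isT).

Lemma h3_lie (R : rcfType) : is_lie (@h3 R).
Proof.
split.
  by move=> u v; rewrite !h3_br -scaleNr; congr (_ *: _); ring.
move=> u v w; rewrite !h3_br !mxE /=.
by rewrite !(mulr0, mul0r, subrr, scale0r, addr0).
Qed.

Lemma g3_sq (R : rcfType) (a b c : R) :
  a * a = 1 -> b * b = 1 -> c * c = 1 -> forall i, g3 a b c i * g3 a b c i = 1.
Proof. by move=> Ha Hb Hc; case=> [[|[|[|?]]] ?]. Qed.

Lemma h3_nil (R : rcfType) : nilpotent_lie (@h3 R).
Proof.
exists 2%N; apply/eqP; rewrite mxrank_eq0 -submx0 /=.
have P1P : diagm (g3 (1 : R) 0 0) *m diagm (g3 1 0 0) = diagm (g3 1 0 0).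
  rewrite diag_mul; apply/matrixP => i j; rewrite !mxE; case: eqP => // _.
  by case: i => [[|[|[|?]]] ?]; rewrite /g3 /= ?mulr1 ?mulr0.
apply: (@lcs_sub _ _ _ _ (diagm (g3 (1 : R) 0 0))) => //; last first.
- move=> u v Hv.
  have v1 : v 0 o31 = 0 by rewrite -Hv mul_diag /g3 /= mulr0.
  have v2 : v 0 o32 = 0 by rewrite -Hv mul_diag /g3 /= mulr0.
  by rewrite mulmx0 h3_br v1 v2 !mulr0 subrr scale0r.
- by rewrite mulmx0.
- apply: (@lcs_sub _ _ _ _ 1%:M) => //; first by rewrite mulmx1.
  move=> u v _; rewrite h3_br; apply/rowP => k; rewrite mul_diag !mxE.
  by case: k => [[|[|[|?]]] Hk] //=; rewrite /g3 /=; ring.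
Qed.

Lemma h3_deriv (R : rcfType) :
  derivation (@h3 R) (diagm (g3 (-2) (-1) (-1))).
Proof.
move=> u v; rewrite !h3_br !mul_diag; apply/rowP => k; rewrite mul_diag !mxE.
by case: k => [[|[|[|?]]] Hk] //=; rewrite /g3 /=; ring.
Qed.

Lemma h3_sol1 (R : rcfType) : alg_ricci_soliton (@h3 R) (g1 R).
Proof.
exists (3%:R / 2%:R), (diagm (g3 (-2) (-1) (-1))); split; first exact: h3_deriv.
change (g1 R) with (diagm (g3 (1 : R) 1 (-1))).
have Hg : forall i, g3 (1 : R) 1 (-1) i * g3 1 1 (-1) i = 1.
  by apply: g3_sq; rewrite ?mulrNN mulr1.
apply/matrixP => i j; rewrite ricopE // RicE // !mxE.
case: i => [[|[|[|?]]] Hi] //; case: j => [[|[|[|?]]] Hj] //;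
  rewrite !sum3 /Gam /h3 /g3 /=; field; done.
Qed.

Lemma h3_sol2 (R : rcfType) : alg_ricci_soliton (@h3 R) (g2 R).
Proof.
exists (3%:R / 2%:R), (diagm (g3 (-2) (-1) (-1))); split; first exact: h3_deriv.
change (g2 R) with (diagm (g3 (-1 : R) 1 1)).
have Hg : forall i, g3 (-1 : R) 1 1 i * g3 (-1) 1 1 i = 1.
  by apply: g3_sq; rewrite ?mulrNN mulr1.
apply/matrixP => i j; rewrite ricopE // RicE // !mxE.
case: i => [[|[|[|?]]] Hi] //; case: j => [[|[|[|?]]] Hj] //;
  rewrite !sum3 /Gam /h3 /g3 /=; field; done.
Qed.

Lemma nil1 (R : rcfType) : nilsoliton (@h3 R) (g1 R).
Proof.
split; first exact: h3_lie.
split; last by split; [exact: h3_nil | exact: h3_sol1].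
change (g1 R) with (diagm (g3 (1 : R) 1 (-1))).
by apply: diag_pm; apply: g3_sq; rewrite ?mulrNN mulr1.
Qed.

Lemma nil2 (R : rcfType) : nilsoliton (@h3 R) (g2 R).
Proof.
split; first exact: h3_lie.
split; last by split; [exact: h3_nil | exact: h3_sol2].
change (g2 R) with (diagm (g3 (-1 : R) 1 1)).
by apply: diag_pm; apply: g3_sq; rewrite ?mulrNN mulr1.
Qed.


Notation o40 := (@Ordinal 4 0 isT).
Notation o41 := (@Ordinal 4 1 isT).
Notation o42 := (@Ordinal 4 2 isT).
Notation o43 := (@Ordinal 4 3 isT).

Definition hn (R : rcfType) (i j k : nat) : R :=
  if [&& i == 1%N, j == 2%N & k == 0%N] then 1
  else if [&& i == 2%N, j == 1%N & k == 0%N] then -1 else 0.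

Definition dval (R : rcfType) (j : nat) : R := if j == 1%N then 1 else 2%:R^-1.

Definition csn (R : rcfType) (i j k : nat) : R :=
  if i == 0%N then (if (j != 0%N) && (j == k) then dval R j else 0)
  else if j == 0%N then (if i == k then - dval R i else 0)
  else if k == 0%N then 0 else hn R i.-1 j.-1 k.-1.

Definition cs (R : rcfType) (i j k : 'I_(1 + 3)) : R := csn R i j k.

Definition dg4 (R : rcfType) (a b c d : R) (i : 'I_(1 + 3)) : R :=
  if nat_of_ord i == 0%N then a else if nat_of_ord i == 1%N then b
  else if nat_of_ord i == 2%N then c else d.

Definition csb (R : rcfType) (u v : 'rV[R]_(1 + 3)) (k : 'I_(1 + 3)) : R :=
  if nat_of_ord k == 0%N then 0
  else if nat_of_ord k == 1%N then u 0 o40 * v 0 o41 - u 0 o41 * v 0 o40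
                            + (u 0 o42 * v 0 o43 - u 0 o43 * v 0 o42)
  else if nat_of_ord k == 2%N then 2%:R^-1 * (u 0 o40 * v 0 o42 - u 0 o42 * v 0 o40)
  else 2%:R^-1 * (u 0 o40 * v 0 o43 - u 0 o43 * v 0 o40).

Lemma brcs (R : rcfType) (u v : 'rV[R]_(1 + 3)) :
  br (@cs R) u v = \row_k csb u v k.
Proof.
apply/rowP => k; rewrite brE !sum4 !mxE.
by case: k => [[|[|[|[|?]]]] Hk] //=; rewrite /csb /cs /csn /hn /dval /=; field.
Qed.

Lemma cs_lie (R : rcfType) : is_lie (@cs R).
Proof.
split.
  move=> u v; rewrite !brcs; apply/rowP => k; rewrite !mxE.
  by case: k => [[|[|[|[|?]]]] Hk] //=; rewrite /csb /=; ring.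
move=> u v w; rewrite !brcs; apply/rowP => k; rewrite !mxE.
by case: k => [[|[|[|[|?]]]] Hk] //=; rewrite /csb /= ?mxE /=; field.
Qed.

Lemma dg4_sq (R : rcfType) (a b c d : R) :
  a * a = 1 -> b * b = 1 -> c * c = 1 -> d * d = 1 ->
  forall i, dg4 a b c d i * dg4 a b c d i = 1.
Proof. by move=> Ha Hb Hc Hd; case=> [[|[|[|[|?]]]] ?]. Qed.

Lemma dg4_idem (R : rcfType) (a b c d : R) :
  a * a = a -> b * b = b -> c * c = c -> d * d = d ->
  diagm (dg4 a b c d) *m diagm (dg4 a b c d) = diagm (dg4 a b c d).
Proof.
move=> Ha Hb Hc Hd.
rewrite diag_mul; apply/matrixP => i j; rewrite !mxE; case: eqP => // _.
by case: i => [[|[|[|[|?]]]] ?].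
Qed.

Lemma cs_solv (R : rcfType) : solvable_lie (@cs R).
Proof.
exists 3%N; apply/eqP; rewrite mxrank_eq0 -submx0 /=.
have m00 : (0 : R) * 0 = 0 by rewrite mulr0.
have m11 : (1 : R) * 1 = 1 by rewrite mulr1.
apply: (@derived_sub_sub _ _ _ _ (diagm (dg4 (0 : R) 1 0 0))); last first.
- move=> u v Hu Hv.
  have u0 : u 0 o40 = 0 by rewrite -Hu mul_diag /dg4 /= mulr0.
  have u2 : u 0 o42 = 0 by rewrite -Hu mul_diag /dg4 /= mulr0.
  have u3 : u 0 o43 = 0 by rewrite -Hu mul_diag /dg4 /= mulr0.
  have v0 : v 0 o40 = 0 by rewrite -Hv mul_diag /dg4 /= mulr0.
  have v2 : v 0 o42 = 0 by rewrite -Hv mul_diag /dg4 /= mulr0.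
  have v3 : v 0 o43 = 0 by rewrite -Hv mul_diag /dg4 /= mulr0.
  rewrite mulmx0 brcs; apply/rowP => k; rewrite !mxE.
  by case: k => [[|[|[|[|?]]]] Hk] //=; rewrite /csb /= ?u0 ?u2 ?u3 ?v0 ?v2 ?v3; ring.
- by rewrite mulmx0.
- by apply: dg4_idem.
apply: (@derived_sub_sub _ _ _ _ (diagm (dg4 (0 : R) 1 1 1))); last first.
- move=> u v Hu Hv.
  have u0 : u 0 o40 = 0 by rewrite -Hu mul_diag /dg4 /= mulr0.
  have v0 : v 0 o40 = 0 by rewrite -Hv mul_diag /dg4 /= mulr0.
  rewrite brcs; apply/rowP => k; rewrite mul_diag !mxE.
  by case: k => [[|[|[|[|?]]]] Hk] //=; rewrite /csb /dg4 /= ?u0 ?v0; ring.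
- by apply: dg4_idem.
- by apply: dg4_idem.
apply: (@derived_sub_sub _ _ _ _ 1%:M) => //; last first.
- move=> u v _ _; rewrite brcs; apply/rowP => k; rewrite mul_diag !mxE.
  by case: k => [[|[|[|[|?]]]] Hk] //=; rewrite /csb /dg4 /=; ring.
- by apply: dg4_idem.
- by rewrite mulmx1.
Qed.

Lemma rmE0 (R : rcfType) r (A : 'M[R]_(r, 1)) (B : 'M[R]_(r, 3)) i (p : (0 < 1 + 3)%N) :
  row_mx A B i (Ordinal p) = A i 0.
Proof. have -> : Ordinal p = lshift 3 (0 : 'I_1) by apply/val_inj. by rewrite row_mxEl. Qed.
Lemma rmE1 (R : rcfType) r (A : 'M[R]_(r, 1)) (B : 'M[R]_(r, 3)) i (p : (1 < 1 + 3)%N) :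
  row_mx A B i (Ordinal p) = B i o30.
Proof. have -> : Ordinal p = rshift 1 o30 by apply/val_inj. by rewrite row_mxEr. Qed.
Lemma rmE2 (R : rcfType) r (A : 'M[R]_(r, 1)) (B : 'M[R]_(r, 3)) i (p : (2 < 1 + 3)%N) :
  row_mx A B i (Ordinal p) = B i o31.
Proof. have -> : Ordinal p = rshift 1 o31 by apply/val_inj. by rewrite row_mxEr. Qed.
Lemma rmE3 (R : rcfType) r (A : 'M[R]_(r, 1)) (B : 'M[R]_(r, 3)) i (p : (3 < 1 + 3)%N) :
  row_mx A B i (Ordinal p) = B i o32.
Proof. have -> : Ordinal p = rshift 1 o32 by apply/val_inj. by rewrite row_mxEr. Qed.

Lemma emb_br (R : rcfType) (u v : 'rV[R]_3) :
  br (@cs R) (row_mx 0 u) (row_mx 0 v) = row_mx 0 (br (@h3 R) u v).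
Proof.
rewrite brcs h3_br; apply/rowP => k; rewrite [LHS]mxE.
case: k => [[|[|[|[|?]]]] Hk] //=; rewrite /csb /= ?rmE0 ?rmE1 ?rmE2 ?rmE3 ?mxE /=; ring.
Qed.

Lemma emb_ip (R : rcfType) (a b c : R) (u v : 'rV[R]_3) :
  ip (diagm (dg4 (-1) a b c)) (row_mx 0 u) (row_mx 0 v) = ip (diagm (g3 a b c)) u v.
Proof.
rewrite !ipE sum4 sum3 ?rmE0 ?rmE1 ?rmE2 ?rmE3 !mxE /dg4 /g3 /=; ring.
Qed.

Lemma row_mx0P (R : rcfType) (v : 'rV[R]_(1 + 3)) :
  v 0 o40 = 0 -> v = row_mx 0 (rsubmx v).
Proof.
move=> H; rewrite -{1}(hsubmxK v); congr row_mx.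
apply/rowP => j; rewrite !mxE (ord1 j).
by rewrite -[RHS]H; congr (v _ _); apply/val_inj.
Qed.

Lemma sub_rm01 (R : rcfType) (v : 'rV[R]_(1 + 3)) :
  v 0 o40 = 0 -> (v <= row_mx (0 : 'M[R]_(3, 1)) 1%:M)%MS.
Proof.
move/row_mx0P => ->.
have -> : row_mx 0 (rsubmx v) = rsubmx v *m row_mx (0 : 'M[R]_(3, 1)) 1%:M.
  by rewrite mul_mx_row mulmx0 mulmx1.
exact: submxMl.
Qed.

Lemma cs_derived (R : rcfType) :
  (derived_sub (@cs R) 1%:M == row_mx (0 : 'M[R]_(3, 1)) (1%:M : 'M[R]_3))%MS.
Proof.
apply/andP; split.
  apply/sumsmx_subP => i _; apply/sumsmx_subP => j _; rewrite genmxE.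
  by apply: sub_rm01; rewrite brcs mxE.
apply/row_subP => i.
have H : (row i (row_mx (0 : 'M[R]_(3, 1)) 1%:M) <=
          <<br (@cs R) (row o40 1%:M) (row (rshift 1 i) 1%:M)>>)%MS.
  rewrite genmxE.
  have -> : row i (row_mx (0 : 'M[R]_(3, 1)) 1%:M) =
     (if nat_of_ord i == 0%N then 1 else 2%:R) *: br (@cs R) (row o40 1%:M) (row (rshift 1 i) 1%:M).
    rewrite brcs; apply/rowP => k; rewrite mxE.
    case: i => [[|[|[|?]]] Hi] //; case: k => [[|[|[|[|?]]]] Hk] //=;
      rewrite ?rmE0 ?rmE1 ?rmE2 ?rmE3 !mxE /csb /= ?mxE /=; field; done.
  exact: scalemx_sub (submx_refl _).
apply: submx_trans H _.
apply: (sumsmx_sup o40) => //.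
exact: (sumsmx_sup (rshift 1 i)).
Qed.

Lemma cs_perp (R : rcfType) (a b c : R) (v : 'rV[R]_(1 + 3)) :
  (forall u : 'rV[R]_1, ip (diagm (dg4 (-1) a b c)) (row_mx u 0) v = 0) <->
  exists w : 'rV[R]_3, v = row_mx 0 w.
Proof.
have E : forall u : 'rV[R]_1, ip (diagm (dg4 (-1) a b c)) (row_mx u 0) v = - (u 0 0 * v 0 o40).
  move=> u; rewrite ipE sum4 ?rmE0 ?rmE1 ?rmE2 ?rmE3 !mxE /dg4 /=; ring.
split.
  move=> H; exists (rsubmx v); apply: row_mx0P.
  have := H (const_mx 1); rewrite (E (const_mx 1)) mxE mul1r => /eqP.
  by rewrite oppr_eq0 => /eqP.
case=> w Hv u; rewrite E Hv rmE0 mxE; ring.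
Qed.

Lemma ext_gen (R : rcfType) (a b c : R) :
  a * a = 1 -> b * b = 1 -> c * c = 1 ->
  metric_solv_ext (@h3 R) (diagm (g3 a b c)) (@cs R) (diagm (dg4 (-1) a b c)).
Proof.
move=> Ha Hb Hc.
split; first exact: cs_lie.
split; first by apply: diag_pm; apply: dg4_sq; rewrite ?mulrNN ?mulr1.
split; first exact: cs_solv.
split; first exact: emb_br.
split; first exact: emb_ip.
split; first exact: cs_derived.
exact: cs_perp.
Qed.

Lemma ein1 (R : rcfType) : einstein (@cs R) (diagm (dg4 (-1) (1 : R) 1 (-1))).
Proof.
have Hg : forall i, dg4 (-1) (1 : R) 1 (-1) i * dg4 (-1) 1 1 (-1) i = 1.
  by apply: dg4_sq; rewrite ?mulrNN ?mulr1.
exists (3%:R / 2%:R); apply/matrixP => i j; rewrite RicE // !mxE.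
case: i => [[|[|[|[|?]]]] Hi] //; case: j => [[|[|[|[|?]]]] Hj] //;
  rewrite !sum4 /Gam /cs /csn /hn /dval /dg4 /=; field; done.
Qed.

Lemma ein2 (R : rcfType) : einstein (@cs R) (diagm (dg4 (-1) (-1 : R) 1 1)).
Proof.
have Hg : forall i, dg4 (-1) (-1 : R) 1 1 i * dg4 (-1) (-1) 1 1 i = 1.
  by apply: dg4_sq; rewrite ?mulrNN ?mulr1.
exists (3%:R / 2%:R); apply/matrixP => i j; rewrite RicE // !mxE.
case: i => [[|[|[|[|?]]]] Hi] //; case: j => [[|[|[|[|?]]]] Hj] //;
  rewrite !sum4 /Gam /cs /csn /hn /dval /dg4 /=; field; done.
Qed.

Unset Implicit Arguments.

Theorem mainTheorem4 (R : rcfType) :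
  nilsoliton (@h3 R) (g1 R) /\ nilsoliton (@h3 R) (g2 R) /\
  (exists (m : nat) (cs : 'I_(m + 3) -> 'I_(m + 3) -> 'I_(m + 3) -> R)
          (Gs : 'M[R]_(m + 3)),
      metric_solv_ext (@h3 R) (g1 R) cs Gs /\ einstein cs Gs) /\
  (exists (m : nat) (cs : 'I_(m + 3) -> 'I_(m + 3) -> 'I_(m + 3) -> R)
          (Gs : 'M[R]_(m + 3)),
      metric_solv_ext (@h3 R) (g2 R) cs Gs /\ einstein cs Gs).
Proof.
split; first exact: nil1.
split; first exact: nil2.
split.
  exists 1%N, (@cs R), (diagm (dg4 (-1) (1 : R) 1 (-1))); split; last exact: ein1.
  by apply: ext_gen; rewrite ?mulrNN ?mulr1.
exists 1%N, (@cs R), (diagm (dg4 (-1) (-1 : R) 1 1)); split; last exact: ein2.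
by apply: ext_gen; rewrite ?mulrNN ?mulr1.
Qed.
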